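(* Let $F$ be a finite field with $q$ elements, let $C\subseteq F^n$ be a balanced code with information length $d$, and let $B$ be a non-empty subset of $C$. Let $\omega=\frac{\sum_{\mathbf{b}\in B}\mathrm{w}(\mathbf{b})}{n|B|}$ be the average relative weight of $B$. If $0\le\omega\le 1-q^{-1}$, then $|B|\le q^{d\,h_q(\omega)}$.
   Context: $\mathrm{w}$ denotes Hamming weight. For $I=\{1,\dots,n\}$ and a subset $I'=\{i_1<\dots<i_d\}$, the projection $F^I\to F^{I'}$ sends $(a_1,\dots,a_n)$ to $(a_{i_1},\dots,a_{i_d})$. A subset $C\subseteq F^n$ is a balanced code with information length $d$ if there exist subsets $I_1,\dots,I_s$ of $I$ (repetitions allowed), each of cardinality $d$, and an integer $t$ such that (i) every index $i\in I$ lies in exactly $t$ of the sets $I_j$; (ii) for each $j$, the projection $F^I\to F^{I_j}$ maps $C$ bijectively onto $F^{I_j}$. The $q$-ary entropy is $h_q(x)=x\log_q(q-1)-x\log_q x-(1-x)\log_q(1-x)$ with $0\log_q0=0$. *)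

(* Defs.v *)
From HB Require Import structures.
From mathcomp Require Import all_boot all_order all_algebra.
From mathcomp Require Import all_classical all_reals all_analysis.
Set Implicit Arguments. Unset Strict Implicit. Unset Printing Implicit Defensive.
Import Order.TTheory GRing.Theory Num.Theory.
Local Open Scope ring_scope.

Definition hweight (F : fieldType) (n : nat) (a : {ffun 'I_n -> F}) : nat :=
  #|[set i : 'I_n | a i != 0]|.

(* The projection F^I -> F^{I'} maps C bijectively onto F^{I'}: every target
   pattern on I' is attained by exactly one codeword (targets in F^{I'} are
   represented by words of F^n, only their restriction to I' matters). *)
Definition proj_bij (F : finFieldType) (n : nat) (C : {set {ffun 'I_n -> F}})
    (I' : {set 'I_n}) : Prop :=
  (forall g : {ffun 'I_n -> F}, exists2 c, c \in C & forall i, i \in I' -> c i = g i)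
  /\ (forall c1 c2, c1 \in C -> c2 \in C ->
        (forall i, i \in I' -> c1 i = c2 i) -> c1 = c2).

Definition balanced_code (F : finFieldType) (n : nat) (C : {set {ffun 'I_n -> F}})
    (d : nat) : Prop :=
  exists (s : nat) (I : 'I_s -> {set 'I_n}) (t : nat),
    [/\ (0 < s)%N,
        forall j, #|I j| = d,
        forall i : 'I_n, #|[set j | i \in I j]| = t
      & forall j, proj_bij C (I j)].

Definition xlogq (R : realType) (q : nat) (x : R) : R :=
  if x == 0 then 0 else x * (ln x / ln (q%:R)).

Definition hq (R : realType) (q : nat) (x : R) : R :=
  x * (ln ((q%:R : R) - 1) / ln (q%:R)) - xlogq q x - xlogq q (1 - x).

(* Main.v *)
Require Import Defs.
From HB Require Import structures.
From mathcomp Require Import all_boot all_order all_algebra.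
From mathcomp Require Import all_classical all_reals all_analysis.
From mathcomp Require Import ring lra.
Import Order.TTheory GRing.Theory Num.Theory.

Lemma sum_card (n s t : nat) (I : 'I_s -> {set 'I_n}) (Q : pred 'I_n) :
  (forall i, #|[set j | i \in I j]| = t) ->
  (\sum_j #|[set i in I j | Q i]| = t * #|[set i | Q i]|)%N.
Proof.
move=> Ht.
have E1 : forall j, #|[set i in I j | Q i]| = \sum_i ((i \in I j) && Q i).
  by move=> j; rewrite -sum1dep_card; rewrite big_mkcond /=; apply: eq_bigr => i _; case: (_ && _).
under eq_bigr do rewrite E1.
rewrite exchange_big /=.
rewrite -sum1dep_card big_distrr /= [RHS]big_mkcond /=.
apply: eq_bigr => i _.
case Qi: (Q i); last by apply: big1 => j _; rewrite andbF.
rewrite ?muln1 -(Ht i) -sum1dep_card [RHS]big_mkcond /=.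
by apply: eq_bigr => j _; rewrite andbT; case: (_ \in _).
Qed.

Local Open Scope ring_scope.
Lemma jensen_exp (R : realType) (T : finType) (A : {pred T}) (x : T -> R) :
  (0 < #|A|)%N ->
  expR ((\sum_(i in A) x i) / #|A|%:R) <= (\sum_(i in A) expR (x i)) / #|A|%:R.
Proof.
move=> A0; set N := #|A|%:R; set m := _ / N.
have N0 : 0 < N by rewrite ltr0n.
have H : \sum_(i in A) (1 + (x i - m)) <= \sum_(i in A) (expR (x i) / expR m).
  by apply: ler_sum => i _; rewrite -expRB expR_ge1Dx.
have e : m *+ #|A| = \sum_(i in A) x i by rewrite -mulr_natr -/N /m divfK ?gt_eqF.
rewrite big_split /= sumrB !sumr_const -mulr_suml e subrr addr0 in H.
rewrite ler_pdivlMr // mulrC -ler_pdivlMr ?expR_gt0 //.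
Qed.

Lemma sum_proj (R : comRingType) (F : finFieldType) (n : nat)
  (C : {set {ffun 'I_n -> F}}) (I : {set 'I_n}) (E : R) :
  proj_bij C I ->
  \sum_(c in C) E ^+ #|[set i in I | c i != 0]| = (1 + (#|F|%:R - 1) * E) ^+ #|I|.
Proof.
case=> Hex Huniq.
pose e (x : F) : R := if x == 0 then 1 else E.
have He : \sum_(x : F) e x = 1 + (#|F|%:R - 1) * E.
  rewrite (bigD1 0) //= /e eqxx; congr (_ + _).
  rewrite (eq_bigr (fun=> E)); last by move=> x /negbTE ->.
  have h : (0 < #|F|)%N by apply/card_gt0P; exists 0.
  by rewrite sumr_const cardC1 -mulr_natl -{2}(prednK h) mulrSr mulr1 addrK mulr_natl.
rewrite -He -prodr_const (big_distr_big 0 (fun i => i \in I) predT).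
have Hc : forall c : {ffun 'I_n -> F},
    E ^+ #|[set i in I | c i != 0]| = \prod_(i in I) e (c i).
  move=> c; rewrite -prodr_const big_mkcond [RHS]big_mkcond /=.
  apply: eq_bigr => i _; rewrite inE /e; case: (i \in I) => //=.
  by case: (c i == 0).
rewrite (eq_bigr _ (fun c _ => Hc c)).
pose zo (c : {ffun 'I_n -> F}) : {ffun 'I_n -> F} :=
  [ffun i => if i \in I then c i else 0].
have zoinj : {in C &, injective zo}.
  move=> c1 c2 h1 h2 /ffunP Hz; apply: Huniq => // i iI.
  by have := Hz i; rewrite !ffunE iI.
have Hp : forall c, \prod_(i in I) e (zo c i) = \prod_(i in I) e (c i).
  by move=> c; apply: eq_bigr => i iI; rewrite ffunE iI.
rewrite -(eq_bigr _ (fun c _ => Hp c)) -(big_imset (fun f : {ffun 'I_n -> F} => \prod_(i in I) e (f i)) zoinj).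
apply: eq_bigl => f; apply/imsetP/pffun_onP.
  case=> c cC ->; split.
    by apply/supportP => i iI; rewrite ffunE (negbTE iI).
  by [].
case=> /supportP Hs _.
have [c cC Hcf] := Hex f; exists c => //.
apply/ffunP => i; rewrite ffunE; case: ifP => iI.
  by rewrite Hcf.
by rewrite Hs // iI.
Qed.

Theorem theorem3p3 (R : realType) (F : finFieldType) (n d : nat)
    (C B : {set {ffun 'I_n -> F}}) :
  balanced_code C d ->
  B \subset C ->
  (0 < #|B|)%N ->
  let q := #|F| in
  let omega : R := (\sum_(b in B) hweight b)%:R / (n * #|B|)%:R in
  0 <= omega <= 1 - (q%:R)^-1 ->
  (#|B|%:R : R) <= (q%:R : R) `^ (d%:R * hq q omega).
Proof.
move=> Hbal BC B0 q omega /andP[om0 om1].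
have q1 : (1 < q)%N by exact: card_finNzRing_gt1.
have qR1 : (1 : R) < q%:R by rewrite ltr1n.
set W := (\sum_(b in B) hweight b)%N.
have [W0|Wpos] := eqVneq W 0%N.
  have om_0 : omega = 0 by rewrite /omega -/W W0 mul0r. 
  have hq0 : hq q omega = 0.
    by rewrite om_0 /hq /xlogq eqxx !subr0 oner_eq0 ln1 !mul0r mulr0 subr0.
  rewrite hq0 mulr0 powRr0 lern1.
  have Bz : B \subset [set ([ffun=> 0] : {ffun 'I_n -> F})].
    apply/fintype.subsetP => b bB; rewrite inE; apply/eqP/ffunP => i; rewrite ffunE.
    have : hweight b = 0%N.
      by apply/eqP; rewrite -leqn0 -W0 /W (bigD1 b) //= leq_addr.
    move/eqP; rewrite cards_eq0 => /eqP /setP /(_ i); rewrite !inE.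
    by move/negbFE/eqP.
  by rewrite (leq_trans (subset_leq_card Bz)) ?cards1.
have Hw : forall b : {ffun 'I_n -> F}, (hweight b <= n)%N.
  by move=> b; rewrite /hweight (leq_trans (max_card _)) ?card_ord.
have n0 : (0 < n)%N.
  rewrite lt0n; apply/eqP => n0; move: Wpos; rewrite /W big1 ?eqxx // => b _.
  by apply/eqP; rewrite -leqn0 (leq_trans (Hw b) (eq_leq n0)).
have nR : (n%:R : R) != 0 by rewrite pnatr_eq0 -lt0n.
set N : R := #|B|%:R.
have NR0 : 0 < N by rewrite ltr0n.
have om_pos : 0 < omega by rewrite /omega divr_gt0 // ltr0n ?muln_gt0 ?n0 // lt0n.
have om_lt1 : omega < 1.
  have : 0 < (q%:R : R)^-1 by rewrite invr_gt0 ltr0n ltnW.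
  move: om1; lra.
case: Hbal => s [I [t [s0 Hd Ht Hpb]]].
have sR : (s%:R : R) != 0 by rewrite pnatr_eq0 -lt0n.
have nt : (n * t = s * d)%N.
  have := @sum_card _ _ _ I predT Ht.
  have e1 : forall j, #|[set i in I j | predT i]| = d.
    by move=> j; rewrite -(Hd j); apply: eq_card => i; rewrite !inE andbT.
  have e2 : #|[set i : 'I_n | predT i]| = n.
    by rewrite -[RHS]card_ord; apply: eq_card => i; rewrite inE.
  by rewrite (eq_bigr _ (fun j _ => e1 j)) sum_nat_const card_ord e2 mulnC => ->; rewrite mulnC.
have tE : (t%:R : R) = s%:R * d%:R / n%:R.
  by rewrite -natrM -nt natrM mulrAC divff // mul1r.
set qr : R := q%:R.
have qr1 : 0 < qr - 1 by rewrite subr_gt0.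
set mu : R := omega / ((qr - 1) * (1 - omega)).
have mu0 : 0 < mu by rewrite /mu divr_gt0 // mulr_gt0 // subr_gt0.
set al : R := ln mu.
have eal : expR al = mu by rewrite /al lnK // posrE.
set K : R := (1 + (qr - 1) * mu) ^+ d.
have HA : forall j, \sum_(c in C) expR (al * (#|[set i in I j | c i != 0]|)%:R) = K.
  move=> j; rewrite /K -(Hd j) /qr /q -(@sum_proj _ _ _ _ _ mu (Hpb j)).
  by apply: eq_bigr => c _; rewrite expRM_natr eal.
set ga : R := al * d%:R / n%:R.
have HB : forall c : {ffun 'I_n -> F}, ga * (hweight c)%:R =
    (\sum_(j < s) al * (#|[set i in I j | c i != 0]|)%:R) / s%:R.
  move=> c; rewrite -mulr_sumr -natr_sum (@sum_card _ _ _ I (fun i => c i != 0) Ht).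
  rewrite natrM tE /ga /hweight; field.
  by apply/andP; split.
have HD : \sum_(c in C) expR (ga * (hweight c)%:R) <= K.
  apply: (@le_trans _ _ (\sum_(c in C)
       (\sum_(j < s) expR (al * (#|[set i in I j | c i != 0]|)%:R)) / s%:R)).
    apply: ler_sum => c _; rewrite HB.
    have J := @jensen_exp R _ predT (fun j => al * (#|[set i in I j | c i != 0]|)%:R).
    by move: J; rewrite card_ord; apply.
  rewrite -mulr_suml exchange_big /= (eq_bigr _ (fun j _ => HA j)) sumr_const card_ord.
  by rewrite -[K *+ s]mulr_natr mulfK.
have HE : \sum_(b in B) expR (ga * (hweight b)%:R) <= K.
  apply: le_trans HD.
  rewrite [X in _ <= X](big_setID B) /= (finset.setIidPr BC) lerDl.
  by apply: sumr_ge0 => c _; apply: expR_ge0.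
have HF : expR (al * d%:R * omega) <= K / N.
  have J := @jensen_exp R _ (mem B) (fun b => ga * (hweight b)%:R) B0.
  move: J; rewrite -mulr_sumr -natr_sum -/W -/N.
  have -> : ga * W%:R / N = al * d%:R * omega.
    by rewrite /ga /omega -/W natrM -/N; field; apply/andP; split => //; rewrite gt_eqF.
  move=> J; apply: le_trans J _.
  by rewrite ler_wpM2r // invr_ge0 ltW.
have lq0 : 0 < ln qr by rewrite ln_gt0.
have om1' : 0 < 1 - omega by rewrite subr_gt0.
have Le : 1 + (qr - 1) * mu = (1 - omega)^-1.
  rewrite /mu; field; rewrite !gt_eqF //.
have HK : K = expR (d%:R * - ln (1 - omega)).
  by rewrite /K Le expRM_natl -lnV ?posrE // lnK // posrE invr_gt0.
have Hal : al = ln omega - (ln (qr - 1) + ln (1 - omega)).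
  have h1 : ln ((qr - 1) * (1 - omega)) = ln (qr - 1) + ln (1 - omega).
    by rewrite lnM // posrE.
  rewrite /al /mu ln_div ?h1 // posrE ?mulr_gt0 //.
have Hh : hq q omega * ln qr =
    omega * ln (qr - 1) - omega * ln omega - (1 - omega) * ln (1 - omega).
  rewrite /hq /xlogq -/qr !gt_eqF //; field; rewrite gt_eqF //.
have -> : qr `^ (d%:R * hq q omega) = K / expR (al * d%:R * omega).
  rewrite /powR gt_eqF ?(lt_trans ltr01 qR1) // HK -expRB; congr expR.
  rewrite -mulrA Hh Hal; ring.
by rewrite ler_pdivlMr ?expR_gt0 // mulrC -ler_pdivlMr.
Qed.
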